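(* Let $M\in U_q^+$ be a $q$-commutator monomial $M\in\bigcup_kP_k$, given as an iterated $q$-bracket expression in the generators $E_i$. Then $\pi_B^+(M)=0$ if and only if, in this expression, some application of the $q$-bracket $[X,Y]_q$ has arguments $X,Y$ of weights $\alpha,\beta$ with $\langle\alpha,\beta\rangle_B=0$. If no such application occurs, $\pi_B^+(M)\in\mathcal{P}_B^+$ is a nonzero monomial (nonzero scalar multiple of a monomial in the $e_i$).
   Context: $\mathfrak{g}$ is an untwisted affine Lie algebra with Cartan matrix $A=(a_{ij})$ (indices $i=0,\dots,\ell$); $d_i$ coprime positive integers with $c_{ij}=d_ia_{ij}=d_ja_{ji}$, invariant form normalized by $(\alpha_i,\alpha_j)=c_{ij}$. Choose $\sigma_{ij}\in\{\pm1\}$ for $i<j$ with $a_{ij}\ne0$ and put $b_{ij}=\sigma_{ij}c_{ij}$ ($i<j$), $b_{ii}=0$, $b_{ij}=-\sigma_{ji}c_{ij}$ ($i>j$). Let $\{\cdot,\cdot\}_B$ be the skew-symmetric bilinear form on the root lattice with $\{\alpha_i,\alpha_j\}_B=b_{ij}$, and $\langle\alpha,\beta\rangle_B:=(\alpha,\beta)-\{\alpha,\beta\}_B$. $\mathcal{P}_B^+$ is the $\mathbb{Q}(q)$-algebra generated by $e_i$ with $e_ie_j=q^{b_{ij}}e_je_i$, and $\pi_B^+:U_q^+\to\mathcal{P}_B^+$ is the weight-graded algebra surjection with $E_i\mapsto e_i$, where $U_q^+$ is the positive part of the quantum enveloping algebra $U_q(\mathfrak{g})$ (generated by $E_i$,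 weight of $E_i$ is $\alpha_i$). The $q$-bracket is $[x,y]_q=xy-q^{(\mu,\nu)}yx$ for $x,y$ of weights $\mu,\nu$. $P_0=\{E_i\}$, $P_{k+1}=\bigcup_{a,b\le k}\{[x,y]_q:x\in P_a,y\in P_b\}$. *)

(* Defs.v *)
From HB Require Import structures.
From mathcomp Require Import all_boot all_order all_algebra.
From mathcomp Require Import fraction mpoly.
Set Implicit Arguments. Unset Strict Implicit. Unset Printing Implicit Defensive.
Import Order.TTheory GRing.Theory Num.Theory.
Local Open Scope ring_scope.

Definition Qq : fieldType := {fraction {poly rat}}.
Definition qQ : Qq := tofrac ('X : {poly rat}).

Section Cartan.
Variable n : nat. (* n = l+1, indices 0..l are 'I_n *)

Definition is_GCM (A : 'I_n -> 'I_n -> int) : Prop :=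
  [/\ forall i, A i i = 2,
      forall i j, i != j -> A i j <= 0 &
      forall i j, A i j = 0 <-> A j i = 0].

Definition indecomposable (A : 'I_n -> 'I_n -> int) : Prop :=
  forall S : {set 'I_n}, S != set0 -> S != setT ->
    exists i j, [/\ i \in S, j \notin S & A i j != 0].

Definition symmetrizer (A : 'I_n -> 'I_n -> int) (d : 'I_n -> nat) : Prop :=
  [/\ forall i, (0 < d i)%N,
      \big[gcdn/0%N]_(i < n) d i = 1%N &
      forall i j, (d i)%:Z * A i j = (d j)%:Z * A j i].

End Cartan.

(* Untwisted affine Cartan matrix with the affine node labelled 0:
   indecomposable GCM, positive null vector a of A with a_0 = 1 (affine type),
   positive null vector a^v of A^T with a^v_0 = 1, and alpha_0 a long root. *)
Definition untwisted_affine (l : nat) (A : 'I_l.+1 -> 'I_l.+1 -> int)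
    (d : 'I_l.+1 -> nat) : Prop :=
  [/\ is_GCM A, indecomposable A,
      exists a : 'I_l.+1 -> int,
        [/\ a ord0 = 1, forall i, 0 < a i & forall i, \sum_j A i j * a j = 0],
      exists av : 'I_l.+1 -> int,
        [/\ av ord0 = 1, forall i, 0 < av i & forall j, \sum_i av i * A i j = 0] &
      forall i, (d i <= d ord0)%N].

Section Quantum.
Variable n : nat.

Definition cmat (A : 'I_n -> 'I_n -> int) (d : 'I_n -> nat) (i j : 'I_n) : int :=
  (d i)%:Z * A i j.

(* b_ij, with sigma_ij = (-1)^(sg i j) *)
Definition bmat (A : 'I_n -> 'I_n -> int) (d : 'I_n -> nat)
    (sg : 'I_n -> 'I_n -> bool) (i j : 'I_n) : int :=
  if (i < j)%N then (-1) ^+ sg i j * cmat A d i j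
  else if (j < i)%N then - ((-1) ^+ sg j i * cmat A d i j)
  else 0.

Definition bform (g : 'I_n -> 'I_n -> int) (a b : 'I_n -> int) : int :=
  \sum_i \sum_j a i * b j * g i j.

Definition angB A d sg (a b : 'I_n -> int) : int :=
  bform (cmat A d) a b - bform (bmat A d sg) a b.

(* iterated q-bracket expressions in the generators E_i; the set of all such
   expressions is exactly \bigcup_k P_k *)
Inductive qexpr : Type :=
| QGen of 'I_n
| QBr of qexpr & qexpr.

Fixpoint wt (t : qexpr) : 'I_n -> int :=
  match t with
  | QGen i => fun k => (k == i)%:R
  | QBr x y => fun k => wt x k + wt y k
  end.

(* P_B^+ : as a vector space, the span of ordered monomials
   e^m = e_0^{m_0} ... e_{n-1}^{m_{n-1}}, modelled by 'X_[m];
   product: e^m1 e^m2 = q^(sum_{i>j} m1_i m2_j b_ij) e^(m1+m2),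
   which is the algebra generated by e_i = 'X_i with e_i e_j = q^{b_ij} e_j e_i. *)
Definition twist (B : 'I_n -> 'I_n -> int) (m1 m2 : 'X_{1..n}) : int :=
  \sum_(i < n) \sum_(j < n | (j < i)%N) (m1 i)%:Z * (m2 j)%:Z * B i j.

Definition qmul (B : 'I_n -> 'I_n -> int) (p r : {mpoly Qq[n]}) : {mpoly Qq[n]} :=
  \sum_(m1 <- msupp p) \sum_(m2 <- msupp r)
     (p@_m1 * r@_m2 * qQ ^ (twist B m1 m2)) *: 'X_[m1 + m2].

Definition qword (B : 'I_n -> 'I_n -> int) (w : seq 'I_n) : {mpoly Qq[n]} :=
  foldr (fun i p => qmul B 'X_i p) 1 w.

(* pi_B^+(M): image under the algebra map E_i |-> e_i of the expression M,
   with [x,y]_q = x y - q^{(mu,nu)} y x *)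
Fixpoint piB A d sg (t : qexpr) : {mpoly Qq[n]} :=
  match t with
  | QGen i => 'X_i
  | QBr x y =>
      qmul (bmat A d sg) (piB A d sg x) (piB A d sg y)
      - qQ ^ (bform (cmat A d) (wt x) (wt y)) *:
          qmul (bmat A d sg) (piB A d sg y) (piB A d sg x)
  end.

Fixpoint has_null_bracket A d sg (t : qexpr) : Prop :=
  match t with
  | QGen _ => False
  | QBr x y => angB A d sg (wt x) (wt y) = 0
               \/ has_null_bracket A d sg x \/ has_null_bracket A d sg y
  end.

End Quantum.
Arguments QGen {n}.
Arguments QBr {n}.

(* Main.v *)
Require Import Defs.
From HB Require Import structures.
From mathcomp Require Import all_boot all_order all_algebra.
From mathcomp Require Import fraction mpoly.
Import GRing.Theory.
Local Open Scope ring_scope.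

Lemma qQ_neq0 : qQ != 0.
Proof. by rewrite /qQ tofrac_eq0 polyX_eq0. Qed.

Lemma qQXn (k : nat) : qQ ^+ k = tofrac ('X^k : {poly rat}).
Proof. by rewrite /qQ rmorphXn. Qed.

Lemma qQn_eq1 (k : nat) : qQ ^+ k = 1 -> k = 0%N.
Proof.
rewrite qQXn -[1 : Qq](rmorph1 (@tofrac _)) => /eqP; rewrite tofrac_eq => /eqP H.
have := congr1 (fun p : {poly rat} => size p) H; rewrite size_polyXn size_poly1; by case.
Qed.

Lemma qQ_inj (a b : int) : qQ ^ a = qQ ^ b -> a = b.
Proof.
move=> H.
have H1 : qQ ^ (a - b) = 1.
  by rewrite expfzDr ?qQ_neq0 // H -expfzDr ?qQ_neq0 // subrr expr0z.
apply/eqP; rewrite -subr_eq0; apply/eqP; move: H1.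
case: (a - b) => [k|k].
  by move=> /qQn_eq1 ->.
rewrite NegzE -invr_expz => /eqP; rewrite invr_eq1 => /eqP /qQn_eq1 //.
Qed.

Lemma qmul0l n B (r : {mpoly Qq[n]}) : qmul B 0 r = 0.
Proof. by rewrite /qmul msupp0 big_nil. Qed.
Lemma qmul0r n B (r : {mpoly Qq[n]}) : qmul B r 0 = 0.
Proof. by rewrite /qmul; apply: big1 => m _; rewrite msupp0 big_nil. Qed.

Lemma qmulXX n B (a b : Qq) (m1 m2 : 'X_{1..n}) :
  qmul B (a *: 'X_[m1]) (b *: 'X_[m2]) =
  (a * b * qQ ^ (twist B m1 m2)) *: 'X_[m1 + m2].
Proof.
have [->|a0] := eqVneq a 0; first by rewrite scale0r qmul0l !mul0r scale0r.
have [->|b0] := eqVneq b 0; first by rewrite scale0r qmul0r mulr0 mul0r scale0r.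
rewrite /qmul (perm_big _ (msuppZ _ a0)) msuppX big_seq1.
rewrite (perm_big _ (msuppZ _ b0)) msuppX big_seq1.
by rewrite !mcoeffZ !mcoeffX !eqxx !mulr1.
Qed.

Lemma twist_skew n (B : 'I_n -> 'I_n -> int) (f g : 'I_n -> int) :
  (forall i, B i i = 0) -> (forall i j, B j i = - B i j) ->
  \sum_(i < n) \sum_(j < n | (j < i)%N) f i * g j * B i j
  - \sum_(i < n) \sum_(j < n | (j < i)%N) g i * f j * B i j
  = \sum_i \sum_j f i * g j * B i j.
Proof.
move=> Bd Bs.
have E : \sum_(i < n) \sum_(j < n | (j < i)%N) g i * f j * B i j
   = - \sum_(i < n) \sum_(j < n) (if (i < j)%N then f i * g j * B i j else 0).
  rewrite -sumrN.
  under eq_bigr do rewrite big_mkcond /=.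
  rewrite exchange_big /=; apply: eq_bigr => i _; rewrite -sumrN.
  apply: eq_bigr => j _; case: ifP => // _.
  by rewrite Bs mulrN (mulrC (g j)).
rewrite E opprK -big_split /=; apply: eq_bigr => i _.
rewrite big_mkcond -big_split /=; apply: eq_bigr => j _.
case: (ltngtP i j) => [h|h|h].
- by rewrite add0r.
- by rewrite addr0.
- by rewrite (val_inj h) Bd !mulr0 addr0.
Qed.

Section Main.
Variable n : nat.

Fixpoint leaves (t : qexpr n) : seq 'I_n :=
  match t with QGen i => [:: i] | QBr x y => leaves x ++ leaves y end.

Definition mw (w : seq 'I_n) : 'X_{1..n} :=
  foldr (fun i m => (U_(i) + m)%MM) 0%MM w.

Lemma mw_cat w1 w2 : mw (w1 ++ w2) = (mw w1 + mw w2)%MM.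
Proof. elim: w1 => [|i w IH] /=; first by rewrite add0m. by rewrite IH addmA. Qed.

Lemma wt_mw (t : qexpr n) k : wt t k = ((mw (leaves t)) k)%:Z.
Proof.
elim: t => [i|x IHx y IHy].
  rewrite /= addm0 mnm1E [i == k]eq_sym; by case: (k == i).
change (wt x k + wt y k = ((mw (leaves x ++ leaves y)) k)%:Z).
rewrite mw_cat mnmDE PoszD -IHx -IHy //.
Qed.

Lemma qword_X B (w : seq 'I_n) : exists t : int, qword B w = qQ ^ t *: 'X_[mw w].
Proof.
elim: w => [|i w [t IH]] /=.
  by exists 0; rewrite expr0z scale1r mpolyX0.
exists (twist B U_(i)%MM (mw w) + t).
rewrite IH -[X in qmul _ X _]scale1r qmulXX mul1r.
by rewrite expfzDr ?qQ_neq0 // mulrC.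
Qed.

Lemma mpolyX_neq0 (m : 'X_{1..n}) : 'X_[m] != 0 :> {mpoly Qq[n]}.
Proof.
apply/eqP => H; have := congr1 (mcoeff m) H.
by rewrite mcoeffX eqxx mcoeff0 => /eqP; rewrite oner_eq0.
Qed.

Lemma bform_wt g (x y : qexpr n) :
  bform g (wt x) (wt y) =
  bform g (fun k => ((mw (leaves x)) k)%:Z) (fun k => ((mw (leaves y)) k)%:Z).
Proof.
by apply: eq_bigr => i _; apply: eq_bigr => j _; rewrite !wt_mw.
Qed.

Variables (A : 'I_n -> 'I_n -> int) (d : 'I_n -> nat) (sg : 'I_n -> 'I_n -> bool).
Hypothesis Hsym : forall i j, (d i)%:Z * A i j = (d j)%:Z * A j i.

Lemma bmat_diag i : bmat A d sg i i = 0.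
Proof. by rewrite /bmat ltnn. Qed.

Lemma bmat_skew i j : bmat A d sg j i = - bmat A d sg i j.
Proof.
rewrite /bmat /cmat; case: (ltngtP i j) => h.
- by rewrite Hsym.
- by rewrite opprK Hsym.
- by rewrite oppr0.
Qed.

Lemma main_ind (t : qexpr n) :
  (has_null_bracket A d sg t /\ piB A d sg t = 0) \/
  (~ has_null_bracket A d sg t /\
     exists c, c != 0 /\ piB A d sg t = c *: 'X_[mw (leaves t)]).
Proof.
elim: t => [i|x IHx y IHy].
  right; split => //; exists 1; split; first exact: oner_neq0.
  by rewrite scale1r /= addm0.
case: IHx => [[hx px]|[hx [cx [cx0 px]]]].
  left; split; first by right; left.
  by rewrite /= px qmul0l qmul0r scaler0 subr0.
case: IHy => [[hy py]|[hy [cy [cy0 py]]]].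
  left; split; first by right; right.
  by rewrite /= py qmul0l qmul0r scaler0 subr0.
set m1 := mw (leaves x) in px *; set m2 := mw (leaves y) in py *.
have Epi : piB A d sg (QBr x y) =
   (cx * cy * (qQ ^ twist (bmat A d sg) m1 m2 -
     qQ ^ (bform (cmat A d) (wt x) (wt y) + twist (bmat A d sg) m2 m1)))
   *: 'X_[mw (leaves (QBr x y))].
  change (qmul (bmat A d sg) (piB A d sg x) (piB A d sg y)
      - qQ ^ (bform (cmat A d) (wt x) (wt y)) *:
          qmul (bmat A d sg) (piB A d sg y) (piB A d sg x) =
     (cx * cy * (qQ ^ twist (bmat A d sg) m1 m2 -
     qQ ^ (bform (cmat A d) (wt x) (wt y) + twist (bmat A d sg) m2 m1)))
     *: 'X_[mw (leaves x ++ leaves y)]).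
  rewrite px py !qmulXX mw_cat -/m1 -/m2 (addmC m2) scalerA -scalerBl.
  congr (_ *: _); rewrite expfzDr ?qQ_neq0 // mulrBr; congr (_ - _).
  by rewrite mulrCA (mulrC cy).
have Etw : twist (bmat A d sg) m1 m2 - twist (bmat A d sg) m2 m1 =
   bform (bmat A d sg) (wt x) (wt y).
  by rewrite bform_wt; apply: twist_skew; [exact: bmat_diag | exact: bmat_skew].
have [h0|h0] := eqVneq (angB A d sg (wt x) (wt y)) 0.
  left; split; first by left.
  rewrite Epi; move: h0; rewrite /angB -Etw => /eqP; rewrite subr_eq0 => /eqP ->.
  by rewrite subrK subrr mulr0 scale0r.
right; split.
  by case=> [/eqP|[]]; [rewrite (negbTE h0)|by []|by []].
rewrite Epi; exists (cx * cy * (qQ ^ twist (bmat A d sg) m1 m2 -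
     qQ ^ (bform (cmat A d) (wt x) (wt y) + twist (bmat A d sg) m2 m1))).
split; last by [].
apply/mulf_neq0; first by apply/mulf_neq0; [exact: cx0 | exact: cy0].
rewrite subr_eq0; apply/negP => /eqP /qQ_inj E; move: h0.
by rewrite /angB -Etw E addrK subrr eqxx.
Qed.

End Main.
Arguments leaves {n}.
Arguments mw {n}.
Arguments mpolyX_neq0 {n}.
Arguments qword_X {n}.

Theorem mainTheorem9 (l : nat) (A : 'I_l.+1 -> 'I_l.+1 -> int)
    (d : 'I_l.+1 -> nat) (sg : 'I_l.+1 -> 'I_l.+1 -> bool)
    (M : qexpr l.+1) :
  untwisted_affine A d -> symmetrizer A d ->
  (piB A d sg M = 0 <-> has_null_bracket A d sg M) /\
  (~ has_null_bracket A d sg M ->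
     exists (c : Qq) (w : seq 'I_l.+1),
       c != 0 /\ piB A d sg M = c *: qword (bmat A d sg) w).
Proof.
move=> _ [_ _ Hsym].
case: (@main_ind _ A d sg Hsym M) => [[h p]|[h [c [c0 p]]]].
  by split => //; split.
split.
  split=> // /eqP; rewrite p scaler_eq0 (negbTE c0) /= => /eqP H.
  by move: (mpolyX_neq0 (mw (leaves M))); rewrite H eqxx.
move=> _; have [t Ht] := qword_X (bmat A d sg) (leaves M).
exists (c * qQ ^ (- t)), (leaves M); split.
  apply/mulf_neq0; [exact: c0 | exact: (expfz_neq0 _ qQ_neq0)].
rewrite Ht scalerA -mulrA -expfzDr ?qQ_neq0 // addNr expr0z mulr1 //.
Qed.
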